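(* Let $(D,T,k)$ be an instance, $\alpha\ge 1$ a real number, and $\sigma=(v_1,\dots,v_n)$ a regular order of $V(D)$ with $\mathrm{cost}(\sigma)\le\alpha k$, such that $(D,T,k)$ is reduced with respect to $\sigma$. Let $t\in T$ and let $e$ be an affected arc above $t$ with span $[v_l,v_r]$. Then, with $\ell=2(\alpha+1)k+2$, we have $t=v_i$ for some $i$ with $l\le i\le l+\ell$ or $r-\ell\le i\le r$.
   Context: $D$ is a tournament, $T\subseteq V(D)$ is the terminal set, $k$ a positive integer. For an order $\sigma=(v_1,\dots,v_n)$: $[v_l,v_r]=\{v_i:l\le i\le r\}$; an arc $v_iv_j$ is forward if $i<j$, backward if $i>j$; the span of backward arc $v_rv_l$ is $[v_l,v_r]$, and it is above each vertex of its span; a backward arc above a terminal is affected; $\mathrm{cost}(\sigma)$ is the number of affected arcs. A non-terminal interval is an interval with no terminal. $N^+_X(v)=\{u\in X:vu\in A(D)\}$, $N^-_X(v)=\{u\in X:uv\in A(D)\}$. $\sigma$ is regular if for every non-terminal interval $I=[v_l,v_r]$, $|N^+_I(v_l)|\ge\lceil(r-l)/2\rceil$ and $|N^-_I(v_r)|\ge\lceil(r-l)/2\rceil$. A $T$-cycle is a directed cycle containing a terminal. The instance is reduced with respect to $\sigma$ if: $k\ge 1$; $D$ contains a $T$-cycle; every vertex of $D$ lies on some $T$-cycle; and there is no affected arc $uv$ above a terminal $t$ for which there exist $k+1$ pairwise arc-disjoint directed paths from $v$ to $u$ each containing $t$ and consisting only of forward arcs. *)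

(* Defs.v *)
From HB Require Import structures.
From mathcomp Require Import all_boot all_order all_algebra.
From mathcomp Require Import reals.
Set Implicit Arguments. Unset Strict Implicit. Unset Printing Implicit Defensive.

(* A digraph on a finite vertex type V is an arc relation
   A : rel V (A x y means the arc xy exists).  An order sigma = (v_1,...,v_n)
   of V(D) is a duplicate-free sequence s containing every vertex; the
   position of v in sigma is index v s (0-based). *)

Section Defs.
Variable V : finType.

Definition tournament (A : rel V) : Prop :=
  (forall x, ~~ A x x) /\ (forall x y, x != y -> A x y = ~~ A y x).

Definition is_order (s : seq V) : Prop := uniq s /\ (forall v, v \in s).

Definition pos (s : seq V) (v : V) : nat := index v s.

Definition backward (A : rel V) (s : seq V) (u v : V) : bool :=
  A u v && (pos s v < pos s u).

Definition above (s : seq V) (u v w : V) : bool :=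
  (pos s v <= pos s w) && (pos s w <= pos s u).

Definition affected (A : rel V) (s : seq V) (T : {set V}) (u v : V) : bool :=
  backward A s u v && [exists w in T, above s u v w].

Definition cost (A : rel V) (s : seq V) (T : {set V}) : nat :=
  #|[set p : V * V | affected A s T p.1 p.2]|.

Definition interval (s : seq V) (a b : V) : {set V} :=
  [set x | (pos s a <= pos s x) && (pos s x <= pos s b)].

(* sigma is regular: for every non-terminal interval I = [v_l, v_r],
   |N^+_I(v_l)| >= ceil((r-l)/2) and |N^-_I(v_r)| >= ceil((r-l)/2);
   note ceil(m/2) = (m+1)./2 for m : nat. *)
Definition regular (A : rel V) (s : seq V) (T : {set V}) : Prop :=
  forall a b : V, pos s a <= pos s b ->
    [disjoint T & interval s a b] ->
    ((pos s b - pos s a).+1./2 <= #|[set x in interval s a b | A a x]|) /\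
    ((pos s b - pos s a).+1./2 <= #|[set x in interval s a b | A x b]|).

Definition T_cycle (A : rel V) (T : {set V}) (c : seq V) : bool :=
  [&& c != [::], uniq c, cycle A c & has (fun x => x \in T) c].

Definition fwd_path (A : rel V) (s : seq V) (v : V) (p : seq V) (u : V) : bool :=
  path (fun a b => A a b && (pos s a < pos s b)) v p && (last v p == u).

Definition path_arcs (v : V) (p : seq V) : seq (V * V) := zip (v :: p) p.

Definition reduced (A : rel V) (T : {set V}) (k : nat) (s : seq V) : Prop :=
  [/\ 1 <= k,
      exists c, T_cycle A T c,
      (forall x, exists c, T_cycle A T c /\ x \in c) &
      (forall u v t, affected A s T u v -> t \in T -> above s u v t ->
         ~ exists P : 'I_k.+1 -> seq V,
             (forall i, fwd_path A s v (P i) u /\ t \in v :: P i) /\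
             (forall i j, i != j -> forall e,
                  e \in path_arcs v (P i) -> e \notin path_arcs v (P j)))].

End Defs.

(* Main.v *)
Require Import Defs.
From HB Require Import structures.
From mathcomp Require Import all_boot all_order all_algebra.
From mathcomp Require Import reals.
From mathcomp Require Import zify ring lra.
Import Order.TTheory GRing.Theory Num.Theory.
Set Implicit Arguments. Unset Strict Implicit. Unset Printing Implicit Defensive.

Section Aux.
Variable V : finType.
Implicit Types (s : seq V) (A : rel V) (T : {set V}).

Lemma pos_lt s x : is_order s -> pos s x < size s.
Proof. by case=> _ h; rewrite /pos index_mem. Qed.

Lemma pos_inj s : is_order s -> injective (pos s).
Proof.
case=> _ h x y e.
by rewrite -(nth_index x (h x)) -(nth_index x (h y)) -/(pos s x) -/(pos s y) e.
Qed.

Lemma pos_nth s x0 p : is_order s -> p < size s -> pos s (nth x0 s p) = p.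
Proof. by case=> u _ hp; rewrite /pos index_uniq. Qed.

Lemma card_pos_lt s p : is_order s -> p <= size s -> #|[set x | pos s x < p]| = p.
Proof.
move=> [u h] hp.
have -> : [set x | pos s x < p] = [set x in take p s].
  by apply/setP=> x; rewrite !inE in_take.
rewrite cardsE; have/card_uniqP -> : uniq (take p s) by rewrite take_uniq.
by rewrite size_take_min; apply/minn_idPl.
Qed.

Lemma card_pos_range s a b : is_order s -> a <= b -> b <= size s ->
  #|[set x | a <= pos s x < b]| = b - a.
Proof.
move=> ho hab hb.
have -> : [set x | a <= pos s x < b] = [set x | pos s x < b] :\: [set x | pos s x < a].
  by apply/setP=> x; rewrite !inE -leqNgt andbC.
rewrite cardsD (setIidPr _) ?card_pos_lt //; first lia.
by apply/subsetP=> x; rewrite !inE; lia.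
Qed.

Lemma pos_rev s x : is_order s -> pos (rev s) x = size s - (pos s x).+1.
Proof.
move=> [u h].
have hx := h x.
have hp : index x s < size s by rewrite index_mem.
rewrite /pos.
have e : nth x (rev s) (size s - (index x s).+1) = x.
  rewrite nth_rev; last by lia.
  have -> : size s - (size s - (index x s).+1).+1 = index x s by lia.
  by rewrite nth_index.
rewrite -{1}e index_uniq ?rev_uniq // size_rev ltn_subrL /= (leq_ltn_trans (leq0n _) hp) //=.
Qed.

Lemma is_order_rev s : is_order s -> is_order (rev s).
Proof. by case=> u h; split; [rewrite rev_uniq | move=> x; rewrite mem_rev]. Qed.

End Aux.

Section Left.
Variable V : finType.
Implicit Types (s : seq V) (A : rel V) (T : {set V}).

Lemma tour_neq A x y : tournament A -> x != y -> ~~ A x y -> A y x.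
Proof. by case=> _ h ne; rewrite (h _ _ ne) negbK. Qed.

Lemma left_count A s T v t : tournament A -> is_order s -> regular A s T ->
  t \in T -> pos s v < pos s t ->
  #|[set x | pos s v < pos s x < pos s t]| <=
  2 * #|[set x | (pos s v < pos s x < pos s t) && (A v x && A x t)]| + 2 * cost A s T.
Proof.
move=> hA ho hreg tT hvt0; have hvt := ltnW hvt0.
set l := pos s v; set i := pos s t.
set X := [set x | l < pos s x < i].
set G := [set x | (l < pos s x < i) && (A v x && A x t)].
set B12 := [set x in X | ~~ (A v x && A x t) &&
   (~~ A x t || [exists w in T, (l <= pos s w) && (pos s w <= pos s x)])].
set B3 := [set x in X | ~~ A v x &&
   [forall w in T, ~~ ((l <= pos s w) && (pos s w <= pos s x))]].
have hX : X \subset G :|: B12 :|: B3.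
  apply/subsetP=> x xX; rewrite !inE.
  move: (xX); rewrite inE => ->.
  case: (boolP (A v x && A x t)) => //= hg.
  case: (boolP (A x t)) => //= hxt.
  case: (boolP [exists w in T, (l <= pos s w) && (pos s w <= pos s x)]) => //= hex.
  move: hg; rewrite hxt andbT => -> /=.
  by apply/forall_inP=> w wT; apply/negP=> hw; move/negP: hex; apply; apply/exists_inP; exists w.
have c1 : #|X| <= #|G| + #|B12| + #|B3|.
  apply: (leq_trans (subset_leq_card hX)).
  by apply: (leq_trans (leq_card_setU _ _)); rewrite leq_add2r leq_card_setU.
have c2 : #|B12| <= cost A s T.
  pose f x := if A x t then (x, v) else (t, x).
  have finj : {in B12 &, injective f}.
    move=> x y xB yB; rewrite /f.
    have ht : forall z, z \in B12 -> z != t.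
      move=> z; rewrite !inE => /andP[/andP[_ ]]; rewrite -/i => hz _.
      by apply/eqP=> ez; move: hz; rewrite ez ltnn.
    case: (A x t); case: (A y t); move=> /eqP; rewrite xpair_eqE => /andP[/eqP e1 /eqP e2] //.
    - by move: (ht _ xB); rewrite e1 eqxx.
    - by move: (ht _ yB); rewrite -e1 eqxx.
  rewrite -(card_in_imset finj) /cost; apply: subset_leq_card.
  apply/subsetP=> p /imsetP[x xB ->]; rewrite inE /f.
  move: xB; rewrite !inE => /andP[/andP[hlx hxi]] /andP[hng hor].
  rewrite /affected /backward /above.
  case: (boolP (A x t)) => hxt /=.
    have hvx : ~~ A v x by move: hng; rewrite hxt andbT.
    have nxv : v != x by apply/eqP=> e; move: hlx; rewrite -e ltnn.
    rewrite (tour_neq hA nxv hvx) /= -/l hlx /=.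
    by move: hor; rewrite hxt.
  have nxt : x != t by apply/eqP=> e; move: hxi; rewrite e ltnn.
  rewrite (tour_neq hA nxt hxt) /= -/i hxi /=.
  by apply/exists_inP; exists t => //; rewrite leqnn ltnW.
have hXc : #|X| = i - l.+1.
  rewrite /X card_pos_range //.
  by apply: ltnW; apply: pos_lt.
have c3 : 2 * #|B3| <= #|X|.
  have hti : i < size s by apply: pos_lt.
  have exP : exists n, (l <= n) && (nth v s n \in T).
    exists i; rewrite hvt /i /pos nth_index //; by case: ho.
  case: (ex_minnP exP) => j /andP[hlj hjT] hmin.
  have hji : j <= i by apply: hmin; rewrite hvt /i /pos nth_index //; case: ho.
  have hB3 : forall x, x \in B3 -> pos s x < j.
    move=> x; rewrite !inE => /andP[/andP[hlx hxi]] /andP[_ /forall_inP hf].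
    rewrite ltnNge; apply/negP=> hjx.
    move: (hf _ hjT); rewrite pos_nth //; last by apply: (leq_ltn_trans hji).
    by rewrite hlj hjx.
  case: (ltngtP l j) => [hlj' | hjl | elj]; last first.
  - have -> : B3 = set0.
      apply/setP=> x; rewrite in_set0; apply/negP=> xB.
      move: (hB3 _ xB); move: xB; rewrite !inE -elj => /andP[/andP[hlx _] _].
      by rewrite ltnNge ltnW.
    by rewrite cards0.
  - by move: hlj; rewrite leqNgt hjl.
  set w := nth v s j.-1.
  have hjs : j.-1 < size s by lia.
  have hw : pos s w = j.-1 by rewrite pos_nth.
  set I := Defs.interval s v w.
  have hdis : [disjoint T & I].
    apply/pred0P=> y /=; apply/negP=> /andP[yT]; rewrite /I /Defs.interval inE hw -/l.
    move=> /andP[hly hyj].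
    have : j <= pos s y.
      apply: hmin; rewrite hly /pos nth_index //; by case: ho.
    lia.
  have [_ hN] : _ /\ _ := hreg v w ltac:(rewrite hw -/l; lia) hdis.
  have [hN1 _] := hreg v w ltac:(rewrite hw -/l; lia) hdis.
  rewrite hw -/l in hN1.
  set N := [set x in I | A v x] in hN1.
  have hI : #|I| = j - l.
    have -> : I = [set x | l <= pos s x < j].
      by apply/setP=> x; rewrite /I /Defs.interval !inE hw -/l; lia.
    by rewrite card_pos_range //; lia.
  have hNM : #|I :&: [set x | A v x]| + #|I :\: [set x | A v x]| = #|I| := cardsID _ _.
  have eN : I :&: [set x | A v x] = N by apply/setP=> x; rewrite !inE.
  rewrite eN in hNM.
  have vM : v \in I :\: [set x | A v x].
    rewrite !inE -/l leqnn /= hw; case: hA => -> _ /=; lia.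
  have hsub : B3 \subset (I :\: [set x | A v x]) :\ v.
    apply/subsetP=> x xB; have hxj := hB3 _ xB.
    move: xB; rewrite !inE => /andP[/andP[hlx hxi]] /andP[hnv _].
    rewrite hnv hw -/l.
    have -> : x != v by apply/eqP=> e; move: hlx; rewrite e ltnn.
    rewrite /=; apply/andP; split; lia.
  have := subset_leq_card hsub.
  have := cardsD1 v (I :\: [set x | A v x]); rewrite vM.
  have := odd_double_half (j - l).
  lia.
lia.
Qed.

End Left.

Section Right.
Variable V : finType.
Implicit Types (s : seq V) (A : rel V) (T : {set V}).

Definition revA A : rel V := fun x y => A y x.

Lemma tour_rev A : tournament A -> tournament (revA A).
Proof. by case=> h1 h2; split=> [x|x y ne]; rewrite /revA ?h1 // h2 // eq_sym. Qed.

Lemma interval_rev s a b : is_order s ->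
  Defs.interval (rev s) a b = Defs.interval s b a.
Proof.
move=> ho; apply/setP=> x; rewrite !inE !pos_rev //.
have := pos_lt a ho; have := pos_lt b ho; have := pos_lt x ho; lia.
Qed.

Lemma regular_rev A s T : is_order s -> regular A s T -> regular (revA A) (rev s) T.
Proof.
move=> ho hreg a b hab hdis.
rewrite interval_rev // in hdis *.
have ha := pos_lt a ho; have hb := pos_lt b ho.
rewrite !pos_rev // in hab *.
have hba : pos s b <= pos s a by lia.
have [h1 h2] := hreg b a hba hdis.
have -> : size s - (pos s b).+1 - (size s - (pos s a).+1) = pos s a - pos s b by lia.
by split.
Qed.

Lemma cost_rev A s T : is_order s -> cost (revA A) (rev s) T = cost A s T.
Proof.
move=> ho; rewrite /cost.
have -> : [set p : V * V | affected (revA A) (rev s) T p.1 p.2] =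
   (fun p : V * V => (p.2, p.1)) @^-1: [set p : V * V | affected A s T p.1 p.2].
  apply/setP=> [[x y]]; rewrite !inE /= /affected /backward /above /revA !pos_rev //.
  have hx := pos_lt x ho; have hy := pos_lt y ho.
  congr (_ && _).
    congr (_ && _); lia.
  apply: eq_existsb => w; have hw := pos_lt w ho.
  congr (_ && _). 
  rewrite pos_rev //.
  apply/idP/idP; move/andP=> [? ?]; apply/andP; split; lia.
by apply: card_preimset => -[a b] [c d] /= [-> ->].
Qed.

Lemma right_count A s T u t : tournament A -> is_order s -> regular A s T ->
  t \in T -> pos s t < pos s u ->
  #|[set y | pos s t < pos s y < pos s u]| <=
  2 * #|[set y | (pos s t < pos s y < pos s u) && (A t y && A y u)]| + 2 * cost A s T.
Proof.
move=> hA ho hreg tT htu.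
have ho' := is_order_rev ho.
have hu := pos_lt u ho; have ht := pos_lt t ho.
have := left_count (v := u) (tour_rev hA) ho' (regular_rev ho hreg) tT
   ltac:(rewrite !pos_rev //; lia).
rewrite cost_rev //.
have e1 : [set x | pos (rev s) u < pos (rev s) x < pos (rev s) t] =
          [set y | pos s t < pos s y < pos s u].
  apply/setP=> x; rewrite !inE !pos_rev //; have := pos_lt x ho; lia.
have e2 : [set x | (pos (rev s) u < pos (rev s) x < pos (rev s) t) &&
                   (revA A u x && revA A x t)] =
          [set y | (pos s t < pos s y < pos s u) && (A t y && A y u)].
  apply/setP=> x; rewrite !inE /revA !pos_rev //.
  have hx := pos_lt x ho.
  have -> : (size s - (pos s u).+1 < size s - (pos s x).+1 < size s - (pos s t).+1)
            = (pos s t < pos s x < pos s u).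
    by apply/idP/idP => /andP[? ?]; apply/andP; split; lia.
  by rewrite [A t x && _]andbC.
by rewrite e1 e2.
Qed.

End Right.

Lemma arcs_disj (V : finType) (s : seq V) (v x t y u x' y' : V) (e : V * V) :
  pos s v < pos s x -> pos s x < pos s t ->
  pos s v < pos s x' -> pos s x' < pos s t ->
  pos s t < pos s y -> pos s y < pos s u ->
  pos s t < pos s y' -> pos s y' < pos s u -> x != x' -> y != y' ->
  e \in path_arcs v [:: x; t; y; u] -> e \notin path_arcs v [:: x'; t; y'; u].
Proof.
move=> a1 a2 b1 b2 c1 c2 d1 d2 nx ny he; apply/negP=> he'.
move: he he'; rewrite /path_arcs /= !inE.
case/or4P => /eqP ->; rewrite !xpair_eqE;
 case/or4P => /andP[/eqP e1 /eqP e2]; subst;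
 rewrite ?eqxx in nx ny; try done; lia.
Qed.

Unset Implicit Arguments. Set Strict Implicit. Set Printing Implicit Defensive.
Local Open Scope ring_scope.

Theorem lemma3 (R : realType) (V : finType) (A : rel V) (T : {set V})
    (k : nat) (alpha : R) (s : seq V) :
  tournament A -> is_order s -> 1 <= alpha ->
  regular A s T -> ((cost A s T)%:R <= alpha * k%:R :> R) ->
  reduced A T k s ->
  forall t u v : V, t \in T -> affected A s T u v -> above s u v t ->
  let l := pos s v in let r := pos s u in let i := pos s t in
  let ell := 2 * (alpha + 1) * k%:R + 2 in
  ((l%:R <= i%:R :> R) && (i%:R <= l%:R + ell)) \/
  ((r%:R - ell <= i%:R) && (i%:R <= r%:R :> R)).
Proof.
move=> hA ho hal hreg hcost hred t u v tT haff hab l r i ell.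
case: hred => _ _ _ hnp.
have /andP[hli hir] := hab; rewrite -/l -/r -/i in hli hir.
case: (boolP ((l%:R <= i%:R :> R) && (i%:R <= l%:R + ell))) => [h|h1]; first by left.
case: (boolP ((r%:R - ell <= i%:R) && (i%:R <= r%:R :> R))) => [h|h2]; first by right.
exfalso.
move: h1; rewrite ler_nat hli /= -ltNge => h1.
move: h2; rewrite ler_nat hir andbT -ltNge => h2.
set c := cost A s T in hcost.
have k0 : (0 : R) <= k%:R by rewrite ler0n.
have eell : ell = 2 * (alpha * k%:R) + 2 * k%:R + 2 by rewrite /ell; ring.
have hak : 0 <= alpha * k%:R by apply: mulr_ge0 => //; lra.
rewrite eell in h1 h2.
set ak := alpha * k%:R in hcost hak h1 h2.
have hli' : (l < i)%N by rewrite -(ltr_nat R); lra.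
have hir' : (i < r)%N by rewrite -(ltr_nat R); lra.
have hL := left_count hA ho hreg tT hli'.
have hR := right_count hA ho hreg tT hir'.
rewrite -/l -/i -/r -/c in hL hR.
have hs : (r < size s)%N by apply: pos_lt.
rewrite card_pos_range // in hL; last by apply: ltnW; apply: (ltn_trans hir').
rewrite card_pos_range // in hR; last by apply: ltnW.
set G := [set x | _ && (A v x && A x t)] in hL.
set H := [set y | _ && (A t y && A y u)] in hR.
have hG : (k < #|G|)%N.
  rewrite -(ltr_nat R).
  have : (i <= 2 * #|G| + 2 * c + l + 1)%N by lia.
  rewrite -(ler_nat R) !natrD ?natrM /=.
  lra.
have hH : (k < #|H|)%N.
  rewrite -(ltr_nat R).
  have : (r <= 2 * #|H| + 2 * c + i + 1)%N by lia.
  rewrite -(ler_nat R) !natrD ?natrM /=.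
  lra.
pose xs (m : 'I_k.+1) := nth t (enum G) m.
pose ys (m : 'I_k.+1) := nth t (enum H) m.
have xsG m : xs m \in G.
  by rewrite -mem_enum mem_nth // -cardE (leq_trans (ltn_ord m)).
have ysH m : ys m \in H.
  by rewrite -mem_enum mem_nth // -cardE (leq_trans (ltn_ord m)).
have xsinj m m' : m != m' -> pos s (xs m) <> pos s (xs m').
  move=> ne /(pos_inj ho) /eqP; rewrite /xs nth_uniq ?enum_uniq // -?cardE;
    try exact: (leq_trans (ltn_ord _)).
  by apply/negP.
have ysinj m m' : m != m' -> pos s (ys m) <> pos s (ys m').
  move=> ne /(pos_inj ho) /eqP; rewrite /ys nth_uniq ?enum_uniq // -?cardE;
    try exact: (leq_trans (ltn_ord _)).
  by apply/negP.
apply: (hnp u v t haff tT hab).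
exists (fun m => [:: xs m; t; ys m; u]); split.
  move=> m; split; last by rewrite !inE eqxx !orbT.
  move: (xsG m) (ysH m); rewrite !inE => /andP[/andP[a1 a2] /andP[a3 a4]]
    /andP[/andP[b1 b2] /andP[b3 b4]].
  by rewrite /fwd_path /= a1 a2 a3 a4 b1 b2 b3 b4 /= eqxx.
move=> m m' ne e.
have hx1 : xs m != xs m' by apply/eqP=> ee; apply: (xsinj _ _ ne); rewrite ee.
have hy1 : ys m != ys m' by apply/eqP=> ee; apply: (ysinj _ _ ne); rewrite ee.
move: (xsG m) (ysH m) (xsG m') (ysH m'); rewrite !inE.
move=> /andP[/andP[a1 a2] _] /andP[/andP[b1 b2] _]
  /andP[/andP[c1 c2] _] /andP[/andP[d1 d2] _].
have := arcs_disj a1 a2 c1 c2 b1 b2 d1 d2 hx1 hy1 (e:=e).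
rewrite /path_arcs /= !inE; by apply.
Qed.
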